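(* Let $\mathrm{opt}(\mathcal{I}_{\textsf{EVSP}})$ and $\mathrm{opt}(\mathcal{I}_{\textsf{BPP}})$ denote, respectively, the optimal value for the instances $\mathcal{I}_{\textsf{EVSP}}$ and $\mathcal{I}_{\textsf{BPP}}$, where $\mathcal{I}_{\textsf{EVSP}} = f(\mathcal{I}_{\textsf{BPP}})$. Then $\mathrm{opt}(\mathcal{I}_{\textsf{EVSP}}) = 2n - \mathrm{opt}(\mathcal{I}_{\textsf{BPP}})$.
   Context: The electric vehicle sharing problem (EVSP): there is a set of stations, each with a capacity (number of parking spaces) and a number of charging facilities; a fleet of identical electric vehicles with battery capacity $\textsf{L}$ initially located at stations; and a set of customers, each with a set of driving demands $(s^{\text{out}}, t_i, s^{\text{in}}, t_j, \varepsilon)$ (pick-up station, departure time, drop-off station, arrival time, required energy). A demand is fulfilled by a vehicle if the vehicle is at the pick-up station at time $t_i$, its battery energy is at least $\varepsilon$, and there is a free parking space at the drop-off station; the vehicle's energy decreases by $\varepsilon$ and increases only by charging at a charging facility. A customer is served iff all its demands are fulfilled; the objective is to maximize the total rental time $\sum (t_j - t_i)$ over demands of served customers. The one-dimensional bin packing problem (BPP): given items $\mathcal{N} = \{1,\dots,n\}$ with sizes $\ell_i \in (0,1]$, find a partition $\{\mathcal{N}_1,\dots,\mathcal{N}_k\}$ of $\mathcal{N}$ such that the sizes in each part sum to at most $1$ and $k$ (the number of bins) is minimized. The reduction $f$ maps a BPP instance $\mathcal{I}_{\textsf{BPP}}$ to the EVSP instance $\mathcal{I}_{\textsf{EVSP}}$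 with $2n$ customers, each having a single demand: there is a single station $s$ with capacity $n$ and no charging facilities; there are $n$ fully charged vehicles initially at $s$, each with battery capacity $\textsf{L} = 1$; for each item $i \in \mathcal{N}$ there is an item customer with the single demand $(s, 2i, s, 2i+1, \ell_i)$; and there are $n$ dummy customers, each with the single demand $(s, 1, s, 2, \textsf{L})$. Each customer contributes rental time $1$ to the objective, so maximizing total rental time is equivalent to maximizing the number of served customers. *)

(* Defs.v *)
From HB Require Import structures.
From mathcomp Require Import all_boot all_order all_algebra.
Set Implicit Arguments. Unset Strict Implicit. Unset Printing Implicit Defensive.
Import Order.TTheory GRing.Theory Num.Theory.

Definition bpp_feasible (R : realDomainType) (n : nat) (l : 'I_n -> R)
    (P : {set {set 'I_n}}) : Prop :=
  partition P [set: 'I_n] /\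
  (forall B, B \in P -> (\sum_(i in B) l i <= 1)%R).

Definition bpp_opt (R : realDomainType) (n : nat) (l : 'I_n -> R) (k : nat) : Prop :=
  (exists P, bpp_feasible l P /\ #|P| = k) /\
  (forall P, bpp_feasible l P -> k <= #|P|).

(* Stations 'I_nS (capacity, number of chargers), vehicles 'I_nV (initial    *)
(* station and energy, battery capacity L), customers 'I_nC, demands 'I_nD;  *)
(* each demand d belongs to customer (owner d) and is                         *)
(* (sout d, tdep d, sin d, tarr d, eps d).  Times are natural numbers.       *)

Record evsp (R : realDomainType) := EVSP {
  nS : nat;
  cap : 'I_nS -> nat;
  nchg : 'I_nS -> nat;
  nV : nat;
  L : R;
  vst : 'I_nV -> 'I_nS;
  ven : 'I_nV -> R;
  nC : nat;
  nD : nat;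
  owner : 'I_nD -> 'I_nC;
  sout : 'I_nD -> 'I_nS;
  tdep : 'I_nD -> nat;
  sin : 'I_nD -> 'I_nS;
  tarr : 'I_nD -> nat;
  eps : 'I_nD -> R
}.

Section EVSPSemantics.
Variables (R : realDomainType) (I : evsp R).
(* a solution: which vehicle (if any) fulfils each demand, and how much     *)
(* energy the vehicle charges at its pick-up station before that demand     *)
Variables (a : 'I_(nD I) -> option 'I_(nV I)) (ch : 'I_(nD I) -> R).

Definition on (v : 'I_(nV I)) (d : 'I_(nD I)) : bool := a d == Some v.

Definition before (d' d : 'I_(nD I)) : bool := tarr d' <= tdep d.

Definition in_use (v : 'I_(nV I)) (t : nat) : Prop :=
  exists d, on v d /\ tdep d <= t < tarr d.

Definition parked (v : 'I_(nV I)) (s : 'I_(nS I)) (t : nat) : bool :=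
  [forall d, on v d ==> ~~ (tdep d <= t < tarr d)] &&
  ( ([forall d, on v d ==> (t < tarr d)] && (vst v == s)) ||
    [exists d, [&& on v d, tarr d <= t, sin d == s &
       [forall d'', (on v d'' && (tarr d'' <= t)) ==> (tarr d'' <= tarr d)]]]).

Definition at_pickup (v : 'I_(nV I)) (d : 'I_(nD I)) : Prop :=
  ((forall d', on v d' -> d' != d -> ~~ before d' d) /\ vst v = sout d) \/
  (exists d', [/\ on v d', d' != d, before d' d, sin d' = sout d &
     forall d'', on v d'' -> d'' != d -> before d'' d -> tarr d'' <= tarr d']).

Definition energy_at (v : 'I_(nV I)) (d : 'I_(nD I)) : R :=
  (ven v - \sum_(d' | on v d' && (d' != d) && before d' d) eps d'
         + \sum_(d' | on v d' && ((d' == d) || before d' d)) ch d')%R.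

Definition fulfilled_ok (v : 'I_(nV I)) (d : 'I_(nD I)) : Prop :=
  [/\
      (forall d', on v d' -> d' != d -> before d d' \/ before d' d),
      at_pickup v d,
      (0 <= ch d)%R /\ ((0 < ch d)%R -> 0 < nchg (sout d)),
      (eps d <= energy_at v d <= L I)%R &
      #|[set w | (w != v) && parked w (sin d) (tarr d)]| < cap (sin d)].

Definition evsp_feasible : Prop :=
  forall d v, a d = Some v -> fulfilled_ok v d.

Definition served (c : 'I_(nC I)) : bool :=
  [forall d, (owner d == c) ==> (a d != None)].

Definition evsp_value : nat :=
  \sum_(c | served c) \sum_(d | owner d == c) (tarr d - tdep d).

End EVSPSemantics.

Definition evsp_opt (R : realDomainType) (I : evsp R) (k : nat) : Prop :=
  (exists a ch, evsp_feasible (I := I) a ch /\ evsp_value (I := I) a = k) /\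
  (forall a ch, evsp_feasible (I := I) a ch -> evsp_value (I := I) a <= k).

(* The reduction f.  Items are 0-indexed here: item i (paper: item i+1) has  *)
(* the demand (s, 2(i+1), s, 2(i+1)+1, l i); customers/demands 'I_(n+n):     *)
(* the first n are item customers, the last n are dummy customers with the   *)
(* demand (s, 1, s, 2, L).  Each customer has exactly one demand.            *)

Definition red_tdep (n : nat) (d : 'I_(n + n)) : nat :=
  match split d with inl i => 2 * i.+1 | inr _ => 1 end.
Definition red_tarr (n : nat) (d : 'I_(n + n)) : nat :=
  match split d with inl i => (2 * i.+1).+1 | inr _ => 2 end.
Definition red_eps (R : realDomainType) (n : nat) (l : 'I_n -> R) (d : 'I_(n + n)) : R :=
  match split d with inl i => l i | inr _ => 1%R end.

Definition reduction (R : realDomainType) (n : nat) (l : 'I_n -> R) : evsp R :=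
  @EVSP R 1 (fun _ => n) (fun _ => 0%N)
        n 1%R (fun _ => ord0) (fun _ => 1%R)
        (n + n) (n + n) id
        (fun _ => ord0) (@red_tdep n) (fun _ => ord0) (@red_tarr n) (red_eps l).

(* Main.v *)
Require Import Defs.
From mathcomp Require Import all_boot all_order all_algebra.
From mathcomp Require Import zify ring lra.
Import Order.TTheory GRing.Theory Num.Theory.
Set Implicit Arguments. Unset Strict Implicit. Unset Printing Implicit Defensive.

Lemma split_l n (i : 'I_n) : split (lshift n i) = inl i.
Proof. exact: (unsplitK (inl i)). Qed.
Lemma split_r n (j : 'I_n) : split (rshift n j) = inr j.
Proof. exact: (unsplitK (inr j)). Qed.

Lemma tdepl n (i : 'I_n) : red_tdep (lshift n i) = 2 * i.+1.
Proof. by rewrite /red_tdep split_l. Qed.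
Lemma tarrl n (i : 'I_n) : red_tarr (lshift n i) = (2 * i.+1).+1.
Proof. by rewrite /red_tarr split_l. Qed.
Lemma tdepr n (i : 'I_n) : red_tdep (rshift n i) = 1.
Proof. by rewrite /red_tdep split_r. Qed.
Lemma tarrr n (i : 'I_n) : red_tarr (rshift n i) = 2.
Proof. by rewrite /red_tarr split_r. Qed.
Lemma epsl (R : realDomainType) n (l : 'I_n -> R) (i : 'I_n) : red_eps l (lshift n i) = l i.
Proof. by rewrite /red_eps split_l. Qed.
Lemma epsr (R : realDomainType) n (l : 'I_n -> R) (i : 'I_n) : red_eps l (rshift n i) = 1%R.
Proof. by rewrite /red_eps split_r. Qed.

Lemma eps_ge0 (R : realDomainType) n (l : 'I_n -> R) (hl : forall i, (0 < l i <= 1)%R) d :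
  (0 <= red_eps l d)%R.
Proof.
rewrite /red_eps; case: split => [i|j] //; by case/andP: (hl i) => /ltW.
Qed.

Lemma at_pickup_red (R : realDomainType) n (l : 'I_n -> R) a v d :
  at_pickup (I := reduction l) a v d.
Proof.
rewrite /at_pickup.
case: (boolP [exists d', on (I := reduction l) a v d' && (d' != d) && before d' d]).
  case/existsP=> d0 Hd0.
  pose m := [arg max_(d' > d0 | on (I := reduction l) a v d' && (d' != d) && before d' d) red_tarr d'].
  right; exists m; rewrite /m; case: arg_maxnP => // x /andP[/andP[H1 H2] H3] Hmax.
  split=> //.
  move=> d'' H1' H2' H3'; exact: (Hmax d'' (introT andP (conj (introT andP (conj H1' H2')) H3'))).
move=> Hn; left; split; last by [].
move=> d' H1 H2; apply: contraNN Hn => H3; apply/existsP; exists d'; by rewrite H1 H2 H3.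
Qed.

Lemma parked_red (R : realDomainType) n (l : 'I_n -> R) a v s t :
  #|[set w | (w != v) && parked (I := reduction l) a w s t]| < n.
Proof.
rewrite -[X in _ < X]card_ord -cardsT; apply: proper_card; rewrite properT.
apply/eqP=> /setP /(_ v); by rewrite !inE eqxx.
Qed.


Lemma ch_zero (R : realDomainType) n (l : 'I_n -> R) a ch
  (F : evsp_feasible (I := reduction l) a ch) v d : on a v d -> ch d = 0%R.
Proof.
move=> /eqP H; case: (F d v H) => _ _ [H1 H2] _ _.
apply/eqP; rewrite eq_le H1 andbT leNgt; apply/negP => /H2.
by rewrite ltnn.
Qed.

Lemma energy_eq (R : realDomainType) n (l : 'I_n -> R) a ch
  (F : evsp_feasible (I := reduction l) a ch) v d :
  energy_at a ch v d = (1 - \sum_(d' | on a v d' && (d' != d) && before (I := reduction l) d' d) red_eps l d')%R.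
Proof.
rewrite /energy_at.
have -> : (\sum_(d' | on a v d' && ((d' == d) || before (I := reduction l) d' d)) ch d' = 0)%R.
  by apply: big1 => d' /andP[H _]; exact: ch_zero H.
by rewrite addr0.
Qed.

Lemma energy_eq0 (R : realDomainType) n (l : 'I_n -> R) a v d :
  energy_at (I := reduction l) a (fun _ => 0%R) v d = (1 - \sum_(d' | on a v d' && (d' != d) && before (I := reduction l) d' d) red_eps l d')%R.
Proof.
rewrite /energy_at.
have -> : (\sum_(d' | on a v d' && ((d' == d) || before (I := reduction l) d' d)) (0:R) = 0)%R.
  by apply: big1.
by rewrite addr0.
Qed.

Lemma item_energy (R : realDomainType) n (l : 'I_n -> R) a ch
  (F : evsp_feasible (I := reduction l) a ch) v i0 :
  a (lshift n i0) = Some v ->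
  (\sum_(i | a (lshift n i) == Some v) l i + \sum_(j | a (rshift n j) == Some v) 1 <= 1)%R.
Proof.
move=> H0.
have H0' : a (lshift n i0) == Some v by rewrite H0.
case: (@arg_maxnP _ i0 (fun i => a (lshift n i) == Some v) val H0') => m Hm Hmax.
case: (F (lshift n m) v (eqP Hm)) => _ _ _ /andP[He _] _.
rewrite (energy_eq F) big_split_ord /= epsl in He.
rewrite (bigD1 m) //=.
have E1 : (\sum_(i | (a (lshift n i) == Some v) && (lshift n i != lshift n m) && before (I := reduction l) (lshift n i) (lshift n m)) red_eps l (lshift n i)
   = \sum_(i | (a (lshift n i) == Some v) && (i != m)) l i)%R.
  apply: eq_big => [i|i _]; last by rewrite epsl.
  rewrite /before /= tarrl tdepl (inj_eq (@lshift_inj _ _)).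
  case: (boolP (a (lshift n i) == Some v)) => //= Hi.
  case: (boolP (i != m)) => //= Hne; have := Hmax i Hi.
  move: Hne; rewrite -(inj_eq val_inj) /=; lia.
have E2 : (\sum_(j | (a (rshift n j) == Some v) && (rshift n j != lshift n m) && before (I := reduction l) (rshift n j) (lshift n m)) red_eps l (rshift n j)
   = \sum_(j | (a (rshift n j) == Some v)) 1)%R.
  apply: eq_big => [j|j _]; last by rewrite epsr.
  by rewrite /before /= tarrr tdepl eq_rlshift andbT /=; case: (a _ == _) => //=; lia.
rewrite E1 E2 in He.
move: He; set x := l m; set y := (\sum_(i | _) l i)%R; set z := (\sum_(j | _) _)%R.
move=> He; lra.
Qed.


Lemma dummy_inj (R : realDomainType) n (l : 'I_n -> R) a ch
  (F : evsp_feasible (I := reduction l) a ch) v j1 j2 :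
  a (rshift n j1) = Some v -> a (rshift n j2) = Some v -> j1 = j2.
Proof.
move=> H1 H2; apply/eqP; apply/negPn/negP => Hne.
case: (F _ _ H1) => Hov _ _ _ _.
have : rshift n j2 != rshift n j1 by rewrite (inj_eq (@rshift_inj _ _)) eq_sym.
move/(Hov (rshift n j2) (introT eqP H2)).
by rewrite /before /= !tarrr !tdepr; case.
Qed.

Lemma arith1 (R : realDomainType) (x y z : R) : (0 <= y)%R -> (1 <= z)%R -> (0 < x)%R -> (x + y + z <= 1)%R = false.
Proof. move=> *; apply/negP => ?; lra. Qed.

Lemma dummy_item (R : realDomainType) n (l : 'I_n -> R)
  (hl : forall i, (0 < l i <= 1)%R) a ch
  (F : evsp_feasible (I := reduction l) a ch) v j i :
  a (rshift n j) = Some v -> a (lshift n i) = Some v -> False.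
Proof.
move=> Hj Hi; have := item_energy F Hi.
have hd : (1 <= \sum_(j0 | a (rshift n j0) == Some v) (1:R))%R.
  rewrite (bigD1 j) ?Hj //= lerDl; exact: sumr_ge0.
rewrite (bigD1 i) ?Hi //=.
have h1 : (0 <= \sum_(i0 | (a (lshift n i0) == Some v) && (i0 != i)) l i0)%R.
  by apply: sumr_ge0 => k _; case/andP: (hl k) => /ltW.
case/andP: (hl i) => h3 _.
move: h1 hd h3; set x := l i; set y := (\sum_(i0 | _) l i0)%R; set z := (\sum_(j | _) _)%R.
move=> h1 h2 h3 H; move: (arith1 h1 h2 h3); by rewrite H.
Qed.

Lemma value_eq (R : realDomainType) n (l : 'I_n -> R) a :
  evsp_value (I := reduction l) a =
  #|[set i | a (lshift n i) != None]| + #|[set j | a (rshift n j) != None]|.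
Proof.
rewrite /evsp_value.
have -> : \sum_(c | served (I := reduction l) a c) \sum_(d | owner d == c) (tarr d - tdep d)
   = \sum_(c : 'I_(n + n) | a c != None) 1.
  apply: eq_big => [c|c _].
    apply/forallP/idP => [H|H d]; first by move: (H c) => /implyP; apply.
    by apply/implyP => Hd; have /eqP E : d == c := Hd; rewrite E.
  rewrite /= (big_pred1_eq _ c) /red_tarr /red_tdep.
  case: split => //= i; lia.
rewrite big_split_ord /= -!sum1_card; congr (_ + _); apply: eq_bigl => i; by rewrite inE.
Qed.


Lemma arith2 (v s d k p q v1 u n : nat) : v = s + d -> p <= q -> q <= v1 + u -> s + u = n -> d + v1 <= n -> k <= p -> v <= 2*n - k.
Proof. lia. Qed.

Lemma upper (R : realDomainType) n (l : 'I_n -> R)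
  (hl : forall i, (0 < l i <= 1)%R) k
  (Hk : forall P, bpp_feasible l P -> k <= #|P|) a ch
  (F : evsp_feasible (I := reduction l) a ch) :
  evsp_value (I := reduction l) a <= 2 * n - k.
Proof.
pose key (i : 'I_n) : 'I_n + 'I_n :=
  match a (lshift n i) with Some v => inl v | None => inr i end.
pose P := preim_partition key [set: 'I_n].
have PF : bpp_feasible l P.
  split; first exact: preim_partitionP.
  move=> B /imsetP [x _ ->].
  case Ex: (a (lshift n x)) => [v|].
  - have -> : (\sum_(i in [set y in [set: 'I_n] | key x == key y]) l i
       = \sum_(i | a (lshift n i) == Some v) l i)%R.
      apply: eq_bigl => y; rewrite !inE /key Ex.
      by case: (a (lshift n y)) => [w|] //=; rewrite eq_sym.
    have := item_energy F Ex.
    have : (0 <= \sum_(j | a (rshift n j) == Some v) (1:R))%R by apply: sumr_ge0.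
    set y := (\sum_(i | _) l i)%R; set z := (\sum_(j | _) _)%R.
    move=> h1 h2; apply: le_trans h2; by rewrite lerDl.
  - have -> : (\sum_(i in [set y in [set: 'I_n] | key x == key y]) l i
       = \sum_(i | i == x) l i)%R.
      apply: eq_bigl => y; rewrite !inE /key Ex.
      case E: (a (lshift n y)) => [w|] //=; first by apply/esym/negP => /eqP Hy; rewrite Hy Ex in E.
      by rewrite eq_sym.
    by rewrite big_pred1_eq; case/andP: (hl x).
pose V1 := [set v | [exists i, a (lshift n i) == Some v]].
pose U := [set i | a (lshift n i) == None].
pose S := [set i | a (lshift n i) != None].
pose D := [set j | a (rshift n j) != None].
have c1 : #|P| <= #|key @: [set: 'I_n]|.
  have -> : P = (fun z => [set y in [set: 'I_n] | z == key y]) @: (key @: [set: 'I_n]).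
    by rewrite -imset_comp.
  exact: leq_imset_card.
have c2 : #|key @: [set: 'I_n]| <= #|V1| + #|U|.
  apply: leq_trans (_ : #|inl @: V1 :|: inr @: U| <= _).
    apply: subset_leq_card; apply/subsetP => z /imsetP [i _ ->].
    rewrite /key; case E: (a (lshift n i)) => [v|]; rewrite !inE.
      apply/orP; left; apply/imsetP; exists v => //; rewrite inE; apply/existsP; exists i; by rewrite E.
    apply/orP; right; apply/imsetP; exists i => //; by rewrite inE E.
  apply: leq_trans (leq_card_setU _ _) _.
  by apply: leq_add; apply: leq_imset_card.
have c3 : #|S| + #|U| = n.
  have -> : U = ~: S by apply/setP => i; rewrite !inE; case: (a (lshift n i)).
  by rewrite cardsC card_ord.
have c4 : #|D| + #|V1| <= n.
  pose dv (j : 'I_n) : 'I_n := odflt j (a (rshift n j)).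
  have e1 : #|dv @: D| = #|D|.
    apply: card_in_imset => j1 j2; rewrite !inE /dv.
    case E1: (a (rshift n j1)) => [v1|] // _; case E2: (a (rshift n j2)) => [v2|] // _ /= E.
    by subst; exact: (dummy_inj F E1 E2).
  have e2 : dv @: D :&: V1 = set0.
    apply/setP => v; rewrite !inE; apply/negP => /andP[/imsetP[j]].
    rewrite inE /dv; case E: (a (rshift n j)) => [w|] // _ /= -> /existsP [i /eqP Hi].
    exact: (dummy_item hl F E Hi).
  have := cardsUI (dv @: D) V1; rewrite e2 cards0 addn0 e1 => <-.
  by rewrite -[X in _ <= X]card_ord max_card.
have hv := @value_eq R n l a; rewrite -/S -/D in hv.
exact: (arith2 hv c1 c2 c3 c4 (Hk _ PF)).
Qed.


Lemma card_ge n k : k <= n -> #|[set j : 'I_n | k <= j]| = n - k.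
Proof.
move=> kn.
have E : ~: [set j : 'I_n | k <= j] = widen_ord kn @: [set: 'I_k].
  apply/setP => j; rewrite !inE -ltnNge; apply/idP/imsetP => [Hj|[x _ ->]] /=.
    exists (Ordinal Hj); first by rewrite inE. by apply: val_inj.
  exact: ltn_ord.
have := cardsC [set j : 'I_n | k <= j]; rewrite E card_imset ?cardsT ?card_ord.
  lia.
move=> x y Exy; apply: val_inj; exact: (congr1 val Exy).
Qed.

Lemma lower (R : realDomainType) n (l : 'I_n -> R)
  (hl : forall i, (0 < l i <= 1)%R) k P
  (PF : bpp_feasible l P) (Hc : #|P| = k) :
  exists a ch, evsp_feasible (I := reduction l) a ch /\ evsp_value (I := reduction l) a = 2 * n - k.
Proof.
case: PF => Hpart Hsum.
have /and3P [/eqP cov triv n0] := Hpart.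
have inc i : i \in cover P by rewrite cov inE.
have kn : k <= n.
  rewrite -Hc -[X in _ <= X]card_ord -cardsT (card_partition Hpart) -sum1_card.
  apply: leq_sum => A HA; rewrite card_gt0; apply: contraNneq n0 => <-; exact: HA.
pose idx i := index (pblock P i) (enum P).
have idx_lt i : idx i < k.
  by rewrite -Hc cardE index_mem mem_enum pblock_mem.
pose veh (i : 'I_n) : 'I_n := insubd i (idx i).
have vehE i : val (veh i) = idx i.
  by rewrite val_insubd; have := idx_lt i; case: ifP => // /negbT; rewrite -leqNgt; lia.
have veh_eq i i' : (veh i' == veh i) = (i' \in pblock P i).
  rewrite -(inj_eq val_inj) !vehE -(eq_pblock _ triv (inc i)) eq_sym.
  apply/eqP/eqP => [E|E]; last by rewrite /idx E.
  have h1 : pblock P i \in enum P by rewrite mem_enum pblock_mem.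
  have h2 : pblock P i' \in enum P by rewrite mem_enum pblock_mem.
  exact: (index_inj set0 h1 h2 E).
pose a (d : 'I_(n + n)) : option 'I_n :=
  match split d with inl i => Some (veh i) | inr j => if k <= j then Some j else None end.
have aL i : a (lshift n i) = Some (veh i) by rewrite /a split_l.
have aR j : a (rshift n j) = if k <= j then Some j else None by rewrite /a split_r.
have no_dummy i j : on (I := reduction l) a (veh i) (rshift n j) = false.
  apply/negP; rewrite /on aR; case: ifP => // hk /eqP [E].
  have := idx_lt i; rewrite -vehE -E => h2; have := leq_trans h2 hk; by rewrite ltnn.
have only_self (j : 'I_n) (d : 'I_(n + n)) : k <= j -> on (I := reduction l) a j d -> d = rshift n j.
  move=> hk; case: (split_ordP d) => x -> {d}; rewrite /on ?aL ?aR.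
    move=> /eqP [E]; have := idx_lt x; rewrite -vehE E => h2; have := leq_trans h2 hk; by rewrite ltnn.
  by case: ifP => // _ /eqP [->].
exists a, (fun _ => 0%R); split.
  move=> d v Had; case: (split_ordP d) => x Ed; subst d.
  - rewrite aL in Had; case: Had => <-.
    split.
    + move=> d' Hon Hne; case: (split_ordP d') => y Ed'; subst d'.
        rewrite /before /= !tarrl !tdepl.
        move: Hne; rewrite (inj_eq (@lshift_inj _ _)) -(inj_eq val_inj) /=; lia.
      by rewrite no_dummy in Hon.
    + exact: at_pickup_red.
    + by split; rewrite // ltxx.
    + rewrite energy_eq0 /= epsl; apply/andP; split; last first.
        rewrite lerBlDr lerDl; apply: sumr_ge0 => d _; exact: eps_ge0.
      rewrite lerBrDr; apply: le_trans (Hsum _ (pblock_mem (inc x))).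
      rewrite [X in (_ <= X)%R](bigD1 x) ?mem_pblock ?inc //= lerD2l.
      rewrite big_split_ord /=.
      rewrite [X in (_ + X <= _)%R]big_pred0; last by move=> j; rewrite no_dummy.
      rewrite addr0 big_mkcond [X in (_ <= X)%R]big_mkcond /=.
      apply: ler_sum => y _.
      case: (boolP (on _ _ _ && _ && _)) => [/andP[/andP[H1 H2] _]|_].
        rewrite /on aL in H1; move/eqP: H1 => [/eqP]; rewrite veh_eq => H1; rewrite (inj_eq (@lshift_inj _ _)) in H2.
        by rewrite H1 H2 epsl.
      case: ifP => // _; by case/andP: (hl y) => /ltW.
    + exact: parked_red.
  - rewrite aR in Had; case: ifP Had => // hk [<-].
    have Hself : forall d', on (I := reduction l) a x d' -> d' != rshift n x -> False.
      by move=> d' /(only_self _ _ hk) ->; rewrite eqxx.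
    split.
    + move=> d' Hon Hne; case: (Hself _ Hon Hne).
    + exact: at_pickup_red.
    + by split; rewrite // ltxx.
    + rewrite energy_eq0 /= epsr big_pred0 ?subr0 ?lexx //.
      move=> d'; apply/negP => /andP[/andP[H1 H2] _]; exact: Hself H1 H2.
    + exact: parked_red.
rewrite value_eq.
have -> : [set i | a (lshift n i) != None] = [set: 'I_n].
  by apply/setP => i; rewrite !inE aL.
have -> : [set j | a (rshift n j) != None] = [set j : 'I_n | k <= j].
  by apply/setP => j; rewrite !inE aR; case: ifP.
rewrite cardsT card_ord card_ge //; lia.
Qed.

Unset Implicit Arguments. Set Strict Implicit.

Theorem proposition6 (R : realDomainType) (n : nat) (l : 'I_n -> R)
    (hl : forall i, (0 < l i <= 1)%R) (k : nat) :
  bpp_opt l k -> evsp_opt (reduction l) (2 * n - k).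
Proof.
move=> [[P [PF Hc]] Hmin]; split.
  exact: (lower hl PF Hc).
move=> a ch F; exact: (upper hl Hmin F).
Qed.
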